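(* Let $L,J\ge0$ and let $Q_{\ell,j}(x)$, $0\le\ell\le L$, $0\le j\le J$, be polynomials with nonnegative coefficients; set $Q_\ell(x,u)=\sum_{j=0}^JQ_{\ell,j}(x)u^j$. For an integer $m\ge0$ let $G_m(x,u)=\sum_{k\ge0}G_{m;k}(x)u^k$ be the formal power series solution of \[ G_m(x,u)=u^m+x\sum_{\ell=0}^LQ_\ell(x,u)\,\Delta^\ell G_m(x,u). \] Then for all $k\ge0$, $G_{m;k}(x)=F^{[\ge0]}_{k,m}(x)$, i.e. $G_{m;k}(x)$ is the generating function of allowed lattice paths starting at level $k$ and ending at level $m$.
   Context: $\Delta^\ell G(x,u)=\sum_{k\ge0}G_{k+\ell}(x)u^k$ for $G=\sum_kG_k(x)u^k$, $\ell\ge1$, and $\Delta^0G=G$. Step model: for each level $h\ge0$, the multiset $\mathcal S_h$ contains, for every triple $(\ell,j,r)$ with $0\le\ell\le L$, $0\le j\le\min(h,J)$, $r\ge0$, $[x^r]Q_{\ell,j}(x)\ne0$, one labelled step of displacement $(1+r,\ell-j)$ and weight $[x^r]Q_{\ell,j}(x)$. An allowed path starting at level $k$ is a finite sequence of labelled steps starting at $(0,k)$ such that each step belongs to $\mathcal S_h$, $h$ being the level of its starting point; its weight $w(p)$ is the product of its step weights (empty path: weight 1). $F^{[\ge0]}_{k,m}(x)=\sum_{n\ge0}\sum_pw(p)x^n$, summed over allowed paths from $(0,k)$ to $(n,m)$. *)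

(* Defs.v *)
From HB Require Import structures.
From mathcomp Require Import all_boot all_order all_algebra.
Set Implicit Arguments. Unset Strict Implicit. Unset Printing Implicit Defensive.
Import Order.TTheory GRing.Theory Num.Theory.
Local Open Scope ring_scope.

(* A bivariate formal power series in x and u over R is represented by its
   coefficient array: G k n = [u^k x^n] G. *)
Definition bser (R : Type) := nat -> nat -> R.

Definition Delta (R : Type) (l : nat) (G : bser R) : bser R :=
  fun k n => G (k + l)%N n.

Definition bmul (R : nzSemiRingType) (A B : bser R) : bser R :=
  fun k n => \sum_(i < k.+1) \sum_(a < n.+1) A i a * B (k - i)%N (n - a)%N.

Definition xmul (R : nzSemiRingType) (G : bser R) : bser R :=
  fun k n => if n is n'.+1 then G k n' else 0.

Definition umon (R : nzSemiRingType) (m : nat) : bser R :=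
  fun k n => if (k == m) && (n == 0%N) then 1 else 0.

Definition Qser (R : nzSemiRingType) (J : nat) (Q : nat -> nat -> {poly R})
  (l : nat) : bser R :=
  fun j r => if (j <= J)%N then (Q l j)`_r else 0.

Definition is_solution (R : nzSemiRingType) (L J : nat)
  (Q : nat -> nat -> {poly R}) (m : nat) (G : bser R) : Prop :=
  forall k n, G k n =
    umon R m k n
    + xmul (fun k' n' => \sum_(l < L.+1) bmul (Qser J Q l) (Delta l G) k' n') k n.

(* A labelled step (l, j, r): displacement (1 + r, l - j), weight [x^r]Q_{l,j}. *)
Definition step := (nat * nat * nat)%type.

Fixpoint allowed (R : nzSemiRingType) (L J : nat) (Q : nat -> nat -> {poly R})
  (h : nat) (p : seq step) : bool :=
  match p with
  | [::] => true
  | (l, j, r) :: p' =>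
      [&& (l <= L)%N, (j <= minn h J)%N, (Q l j)`_r != 0
        & allowed L J Q (h + l - j)%N p']
  end.

Fixpoint endlevel (h : nat) (p : seq step) : nat :=
  match p with
  | [::] => h
  | (l, j, r) :: p' => endlevel (h + l - j)%N p'
  end.

Definition xlen (p : seq step) : nat := sumn [seq (1 + s.2)%N | s <- p].

Definition pweight (R : nzSemiRingType) (Q : nat -> nat -> {poly R})
  (p : seq step) : R :=
  \prod_(s <- p) (Q s.1.1 s.1.2)`_s.2.

(* [x^n] F^{[>=0]}_{k,m}(x): sum of weights of allowed paths from (0,k) to
   (n,m).  Such a path has at most n steps, and each step (l,j,r) has
   l <= L, j <= J, r < n, so enumerating all tuples of length s <= n with
   entries in 'I_(L+1) * 'I_(J+1) * 'I_n lists every such path exactly once. *)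
Definition Fcoef (R : nzSemiRingType) (L J : nat) (Q : nat -> nat -> {poly R})
  (k m n : nat) : R :=
  \sum_(s < n.+1) \sum_(t : s.-tuple ('I_L.+1 * 'I_J.+1 * 'I_n))
    let p := [seq ((val x.1.1, val x.1.2, val x.2) : step) | x <- t] in
    if allowed L J Q k p && (endlevel k p == m) && (xlen p == n)
    then pweight Q p else 0.

(* Main.v *)
Require Import Defs.
From HB Require Import structures.
From mathcomp Require Import all_boot all_order all_algebra.
From mathcomp Require Import zify.
Import Order.TTheory GRing.Theory Num.Theory.
Local Open Scope ring_scope.

Lemma sum_tuple_cons (R : nzSemiRingType) (T : finType) s (F : seq T -> R) :
  \sum_(t : s.+1.-tuple T) F t = \sum_(x : T) \sum_(t : s.-tuple T) F (x :: t).
Proof.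
rewrite pair_big /=.
rewrite (reindex (fun p : T * s.-tuple T => [tuple of p.1 :: p.2])) //=.
exists (fun t : s.+1.-tuple T => (thead t, [tuple of behead t])) => [[x t] _|t _] /=.
  by congr (_, _); apply: val_inj.
by rewrite [RHS]tuple_eta.
Qed.

Lemma sum_ord_cut (R : nzSemiRingType) N M (f : nat -> R) : (M <= N)%N ->
  (forall j, (M <= j)%N -> (j < N)%N -> f j = 0) ->
  \sum_(j < N) f j = \sum_(j < M) f j.
Proof.
move=> le H; rewrite (big_ord_widen N f le) [RHS]big_mkcond.
apply: eq_bigr => i _; case: ifP => // /negbT; rewrite -leqNgt => h.
by rewrite H.
Qed.

Section Main.
Variables (R : realDomainType) (L J : nat) (Q : nat -> nat -> {poly R}) (m : nat).

Definition W k n (p : seq step) : R :=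
  if allowed L J Q k p && (endlevel k p == m) && (xlen p == n)
  then pweight Q p else 0.

Definition stp {B} (x : 'I_L.+1 * 'I_J.+1 * 'I_B) : step :=
  (val x.1.1, val x.1.2, val x.2).

Definition P B s k n :=
  \sum_(t : s.-tuple ('I_L.+1 * 'I_J.+1 * 'I_B)) W k n [seq stp x | x <- t].

Definition cst l j r k n : R :=
  if (j <= minn k J)%N && (r < n)%N then (Q l j)`_r else 0.

Fixpoint D s k n : R :=
  match s with
  | 0 => if (k == m) && (n == 0%N) then 1 else 0
  | s'.+1 => \sum_(l < L.+1) \sum_(j < J.+1) \sum_(r < n)
        cst l j r k n * D s' (k + l - j)%N (n - r.+1)%N
  end.

Lemma W_nil k n : W k n [::] = if (k == m) && (n == 0%N) then 1 else 0.
Proof. by rewrite /W /= /pweight big_nil [(0 == n)%N]eq_sym. Qed.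

Lemma W_cons k n l j r p : (l <= L)%N ->
  W k n ((l, j, r) :: p) = cst l j r k n * W (k + l - j)%N (n - r.+1)%N p.
Proof.
move=> hl; rewrite /W /cst /= hl /=.
case: (j <= minn k J)%N => /=; last by rewrite mul0r.
have [->|qnz] := eqVneq ((Q l j)`_r) 0.
  by rewrite /= ; case: ifP; rewrite ?mul0r.
rewrite /=.
case: (ltnP r n) => hr.
  have -> : (1 + r + xlen p == n)%N = (xlen p == n - r.+1)%N.
    by apply/eqP/eqP; lia.
  rewrite /pweight big_cons /=.
  by case: ifP => _; last rewrite mulr0.
have -> : (1 + r + xlen p == n)%N = false by apply/eqP; lia.
by rewrite andbF mul0r.
Qed.

Lemma P_D B s k n : (n <= B)%N -> P B s k n = D s k n.
Proof.
elim: s k n => [|s IH] k n hn.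
  rewrite /P (big_pred1 [tuple]) /=; first by rewrite W_nil.
  by move=> t; rewrite [t]tuple0; apply/esym/eqP.
rewrite /P (@sum_tuple_cons _ _ _ (fun p => W k n [seq stp x | x <- p])) /=.
have E : forall F : 'I_L.+1 -> 'I_J.+1 -> 'I_B -> R,
    \sum_(x : 'I_L.+1 * 'I_J.+1 * 'I_B) F x.1.1 x.1.2 x.2
    = \sum_l \sum_j \sum_r F l j r.
  by move=> F; rewrite pair_big pair_big.
rewrite (eq_bigr (fun x : 'I_L.+1 * 'I_J.+1 * 'I_B => cst x.1.1 x.1.2 x.2 k n
          * D s (k + x.1.1 - x.1.2)%N (n - (x.2 : nat).+1)%N)); last first.
  move=> [[l j] r] _ /=.
  rewrite /stp /=.
  have hl : (l <= L)%N by rewrite -ltnS.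
  under eq_bigr do rewrite (W_cons _ _ _ _ _ _ hl).
  rewrite -mulr_sumr; congr (_ * _).
  by rewrite -IH //; lia.
rewrite (E (fun (l : 'I_L.+1) (j : 'I_J.+1) (r : 'I_B) => cst l j r k n * D s (k + l - j)%N (n - r.+1)%N)); apply: eq_bigr => l _; apply: eq_bigr => j _.
apply: (@sum_ord_cut _ _ _ (fun r : nat => cst l j r k n * D s (k + l - j)%N (n - r.+1)%N)) => // r hr _.
by rewrite /cst (leq_gtF hr) andbF mul0r.
Qed.

Lemma D_zero s k n : (n < s)%N -> D s k n = 0.
Proof.
elim: s k n => [|s IH] k n // hn /=.
apply: big1 => l _; apply: big1 => j _; apply: big1 => r _.
by rewrite IH ?mulr0 //; have := ltn_ord r; lia.
Qed.

Definition F' k n := \sum_(s < n.+1) D s k n.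

Lemma F'_sol : is_solution L J Q m F'.
Proof.
move=> k [|n].
  by rewrite /F' big_ord_recl big_ord0 /= /umon /xmul.
have -> : F' k n.+1 = \sum_(s < n.+1) D s.+1 k n.+1.
  by rewrite /F' big_ord_recl /= andbF add0r.
rewrite /umon /xmul /= andbF add0r.
rewrite exchange_big /=; apply: eq_bigr => l _.
rewrite exchange_big.
under eq_bigr do rewrite exchange_big.
under eq_bigr do under eq_bigr do rewrite -mulr_sumr.
rewrite /bmul /Delta /Qser.
rewrite (@sum_ord_cut _ J.+1 (minn k J).+1 (fun j => \sum_(r < n.+1)
   cst l j r k n.+1 * \sum_(s < n.+1) D s (k + l - j)%N (n.+1 - r.+1)%N)); last first.
- move=> j hj _; apply: big1 => r _.
  by rewrite /cst leqNgt hj /= mul0r.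
- by rewrite ltnS geq_minr.
rewrite [RHS](@sum_ord_cut _ k.+1 (minn k J).+1 (fun i => \sum_(a < n.+1)
   (if (i <= J)%N then (Q l i)`_a else 0) * F' (k - i + l)%N (n - a)%N)); last first.
- move=> j hj hk; apply: big1 => r _.
  have -> : (j <= J)%N = false by move: hj hk; rewrite ltnS; lia.
  by rewrite mul0r.
- by rewrite ltnS geq_minl.
apply: eq_bigr => j _; apply: eq_bigr => r _.
have hj : (j <= minn k J)%N by rewrite -ltnS.
have hjJ : (j <= J)%N by move: hj; lia.
rewrite /cst hj ltn_ord hjJ /=; congr (_ * _).
have -> : (k - j + l = k + l - j)%N by move: hj; lia.
rewrite subSS /F'.
apply: (@sum_ord_cut _ n.+1 (n - r).+1 (fun s => D s (k + l - j)%N (n - r)%N)).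
  by rewrite ltnS leq_subr.
by move=> s hs _; rewrite D_zero.
Qed.

Lemma sol_uniq G1 G2 : is_solution L J Q m G1 -> is_solution L J Q m G2 ->
  forall n k, G1 k n = G2 k n.
Proof.
move=> H1 H2; elim/ltn_ind => n IH k.
rewrite H1 H2; case: n IH => [|n] IH //=; congr (_ + _).
rewrite /xmul; apply: eq_bigr => l _; rewrite /bmul.
apply: eq_bigr => i _; apply: eq_bigr => a _; rewrite /Delta IH //.
by rewrite ltnS leq_subr.
Qed.

Lemma Fcoef_F' k n : Fcoef L J Q k m n = F' k n.
Proof.
rewrite /Fcoef /F'; apply: eq_bigr => s _.
by rewrite -(@P_D n) // /P /W /stp.
Qed.

End Main.
Arguments F' {R L J} Q m.
Arguments F'_sol {R L J} Q m.

Theorem lemma4 (R : realDomainType) (L J : nat) (Q : nat -> nat -> {poly R})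
  (HQ : forall l j i, (l <= L)%N -> (j <= J)%N -> 0 <= (Q l j)`_i)
  (m : nat) :
  (exists G : bser R, is_solution L J Q m G) /\
  (forall G : bser R, is_solution L J Q m G ->
     forall k n, G k n = Fcoef L J Q k m n).
Proof.
split; first by exists (@F' R L J Q m); exact: F'_sol.
move=> G HG k n; rewrite (@sol_uniq R L J Q m G (@F' R L J Q m) HG (@F'_sol R L J Q m) n k).
by rewrite Fcoef_F'.
Qed.
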